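(* Let $A,B$ be real symmetric $n\times n$ matrices, $f,g\in\mathbb{R}^n$, $\mu\in\mathbb{R}$, and consider the problem (QP1QC): $\inf\, x^TAx-2f^Tx$ subject to $x^TBx-2g^Tx\le\mu$. Suppose the primal Slater condition holds (there exists $x_0$ with $x_0^TBx_0-2g^Tx_0<\mu$), the optimal value of (QP1QC) is finite, and $I_{\succeq}(A,B)=\{\sigma\in\mathbb{R}: A+\sigma B\succeq 0\}$ is an interval containing more than one point. Then the infimum of (QP1QC) is attained.
   Context: $A+\sigma B\succeq 0$ means positive semidefinite. *)

(* Defs.v *)
From mathcomp Require Import all_boot all_order all_algebra.
From mathcomp Require Import reals.
Set Implicit Arguments. Unset Strict Implicit. Unset Printing Implicit Defensive.
Import Order.TTheory GRing.Theory Num.Theory.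
Local Open Scope ring_scope.

Definition qform {R : realType} {n : nat} (M : 'M[R]_n) (x : 'cV[R]_n) : R :=
  (x^T *m M *m x) 0 0.

Definition lform {R : realType} {n : nat} (h x : 'cV[R]_n) : R :=
  (h^T *m x) 0 0.

Definition psd {R : realType} {n : nat} (M : 'M[R]_n) : Prop :=
  forall v : 'cV[R]_n, 0 <= qform M v.

Definition qp_obj {R : realType} {n : nat} (A : 'M[R]_n) (f x : 'cV[R]_n) : R :=
  qform A x - 2 * lform f x.

Definition qp_feas {R : realType} {n : nat} (B : 'M[R]_n) (g : 'cV[R]_n) (mu : R)
  (x : 'cV[R]_n) : Prop :=
  qform B x - 2 * lform g x <= mu.

Definition I_psd {R : realType} {n : nat} (A B : 'M[R]_n) (s : R) : Prop :=
  psd (A + s *: B).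

(* Main.v *)
Require Import Defs.
From mathcomp Require Import all_boot all_order all_algebra.
From mathcomp Require Import reals.
From mathcomp Require Import boolp classical_sets topology normedtype derive.
From mathcomp Require Import matrix_topology matrix_normedtype.
From mathcomp Require Import ring lra.
Set Implicit Arguments. Unset Strict Implicit. Unset Printing Implicit Defensive.
Import Order.TTheory GRing.Theory Num.Theory.
Import numFieldTopology.Exports numFieldNormedType.Exports.
Local Open Scope classical_set_scope.
Local Open Scope ring_scope.

Section Sc.
Variable R : realType.
Implicit Types a b c e L t : R.

Lemma S1 a b : (forall t, 0 <= b * t + a * t ^+ 2) -> b = 0.
Proof.
move=> H; apply/eqP/negPn/negP => b0.
set k := `|a| + 1.
have k0 : 0 < k by rewrite /k ltr_wpDl.
have := H (- b / k).
have -> : b * (- b / k) + a * (- b / k) ^+ 2 = b ^+ 2 * (a - k) / k ^+ 2.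
  by field; rewrite gt_eqF.
rewrite pmulr_lge0 ?invr_gt0 ?exprn_gt0 //.
have : 0 < b ^+ 2 by rewrite exprn_even_gt0.
have : a - k < 0 by rewrite /k; have := ler_norm a; lra.
move=> h1 h2 h3; nra.
Qed.

Lemma S2b L c b : (forall t, L <= c + b * t) -> b = 0.
Proof.
move=> H; apply/eqP/negPn/negP => b0.
have := H (- (`|c| + `|L| + 1) / b).
have -> : c + b * (- (`|c| + `|L| + 1) / b) = c - (`|c| + `|L| + 1) by field.
have := ler_norm c; have := ler_norm (- L); rewrite normrN; lra.
Qed.

Lemma S2a L a b : (forall t, L <= b * t + a * t ^+ 2) -> 0 <= a.
Proof.
move=> H; rewrite leNgt; apply/negP => a0.
set M := 1 + (`|b| + `|L| + 1) / (- a).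
have hM : M * (- a) = - a + (`|b| + `|L| + 1) by rewrite /M; field; rewrite lt_eqF // oppr_gt0.
have := H M.
have := ler_norm b; have := ler_norm (- L); rewrite normrN; have := normr_ge0 L; have := normr_ge0 b.
have M1 : 1 <= M.
  have : 0 <= (`|b| + `|L| + 1) / (- a).
    apply: divr_ge0; last lra.
    have := normr_ge0 b; have := normr_ge0 L; lra.
  rewrite /M; lra.
have : b * M <= `|b| * M by apply: ler_wpM2r; [lra| exact: ler_norm].
nra.
Qed.

Lemma S5 t0 L c b : (forall t, t0 <= t -> L <= c - b * t) -> b <= 0.
Proof.
move=> H; rewrite leNgt; apply/negP => b0.
set t := `|t0| + `|c - L| / b + 1.
have ht : b * t = b * `|t0| + `|c - L| + b by rewrite /t; field; rewrite gt_eqF.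
have := H t.
have : t0 <= t.
  rewrite /t; have := ler_norm t0; have : 0 <= `|c - L| / b by rewrite divr_ge0 // ltW.
  lra.
move=> h; move/(_ h).
have := ler_norm (c - L); have : 0 <= b * `|t0| by rewrite mulr_ge0 // ltW.
lra.
Qed.

Lemma bigM e g d : d < 0 -> forall M, 1 <= M -> `|e| + 2 * `|g| <= M * (- d) ->
  forall s, s ^+ 2 = 1 -> e + 2 * (s * M) * g + (s * M) ^+ 2 * d <= 0.
Proof.
move=> d0 M M1 hM s s1.
have -> : (s * M) ^+ 2 = M ^+ 2 by rewrite exprMn s1 mul1r.
have : 2 * (s * M) * g <= 2 * M * `|g|.
  have : s * g <= `|g|.
    have := ler_norm (s * g); rewrite normrM.
    have -> : `|s| = 1.
      by apply/eqP; rewrite -sqrp_eq1 ?normr_ge0 // -normrX s1 normr1.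
    by rewrite mul1r.
  nra.
have h1 : M * (`|e| + 2 * `|g|) <= M * (M * (- d)) by apply: ler_wpM2l; lra.
have h2 : `|e| <= M * `|e| by rewrite ler_peMl.
have := ler_norm e; rewrite expr2; lra.
Qed.


Lemma S4 e g d : d < 0 -> exists t, e + 2 * t * g + t ^+ 2 * d <= 0.
Proof.
move=> d0; set M := 1 + (`|e| + 2 * `|g|) / (- d).
have hq : 0 <= (`|e| + 2 * `|g|) / (- d).
  apply: divr_ge0; last lra.
  have := normr_ge0 e; have := normr_ge0 g; lra.
have hM : M * (- d) = - d + (`|e| + 2 * `|g|) by rewrite /M; field; rewrite lt_eqF // oppr_gt0.
exists (1 * M); apply: bigM => //; rewrite ?expr1n //; [rewrite /M; lra|].
rewrite hM; lra.
Qed.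

Lemma S3 e g d L c b a : d < 0 -> a <= 0 ->
  (forall t, e + 2 * t * g + t ^+ 2 * d <= 0 -> L <= c + 2 * t * b + t ^+ 2 * a) ->
  a = 0 /\ b = 0.
Proof.
move=> d0 a0 H.
have [ab|ab] := boolP ((a == 0) && (b == 0)); first by case/andP: ab => /eqP -> /eqP ->.
exfalso.
set m := `|b| - a.
have m0 : 0 < m.
  rewrite /m; move: ab; rewrite negb_and => /orP [an|bn].
    have := normr_ge0 b; have : a < 0 by rewrite lt_neqAle an. lra.
  have : 0 < `|b| by rewrite normr_gt0. lra.
set s : R := if 0 <= b then -1 else 1.
have s1 : s ^+ 2 = 1 by rewrite /s; case: ifP => _; rewrite ?sqrrN expr1n.
have sb : s * b = - `|b|.
  rewrite /s; case: ifP => hb; first by rewrite ger0_norm // mulN1r.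
  by rewrite ltr0_norm ?mul1r ?opprK //; rewrite ltNge hb.
have hq : 0 <= (`|e| + 2 * `|g|) / (- d).
  apply: divr_ge0; last lra.
  have := normr_ge0 e; have := normr_ge0 g; lra.
have hq2 : 0 <= (`|c| + `|L| + 1) / m.
  apply: divr_ge0; last lra.
  have := normr_ge0 c; have := normr_ge0 L; lra.
set M := 1 + (`|e| + 2 * `|g|) / (- d) + (`|c| + `|L| + 1) / m.
have M1 : 1 <= M by rewrite /M; lra.
have hMd : `|e| + 2 * `|g| <= M * (- d).
  have -> : M * (- d) = - d + (`|e| + 2 * `|g|) + (`|c| + `|L| + 1) / m * (- d).
    by rewrite /M; field; apply/andP; split; [rewrite gt_eqF | rewrite lt_eqF].

  have : 0 <= (`|c| + `|L| + 1) / m * (- d) by apply: mulr_ge0; lra.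
  lra.
have hMm : `|c| + `|L| + 1 <= M * m.
  have -> : M * m = m + (`|e| + 2 * `|g|) / (- d) * m + (`|c| + `|L| + 1).
    by rewrite /M; field; apply/andP; split; [rewrite lt_eqF | rewrite gt_eqF].
  have : 0 <= (`|e| + 2 * `|g|) / (- d) * m by apply: mulr_ge0; lra.
  lra.
have := H (s * M) (@bigM e g d d0 M M1 hMd s s1).
have -> : c + 2 * (s * M) * b + (s * M) ^+ 2 * a = c - 2 * M * `|b| + M ^+ 2 * a.
  rewrite exprMn s1 mul1r; transitivity (c + 2 * M * (s * b) + M ^+ 2 * a); [ring | rewrite sb; ring].
have h1 : M ^+ 2 * a <= M * a.
  have hM0 : 0 <= M * (M - 1) by apply: mulr_ge0; lra.
  have : 0 <= (M * (M - 1)) * (- a) by apply: mulr_ge0; lra.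
  rewrite expr2; nra.
have h2 : M * `|b| <= 2 * M * `|b|.
  have : 0 <= M * `|b| by apply: mulr_ge0; [lra | exact: normr_ge0].
  lra.
have := ler_norm c; have := ler_norm (- L); rewrite normrN.
have hMm' : M * m = M * `|b| - M * a by rewrite /m; ring.
lra.
Qed.

End Sc.

Section Alg.
Variable R : realType.
Variable n : nat.
Implicit Types (M : 'M[R]_n) (x y z : 'cV[R]_n).

Lemma tr11 (X : 'M[R]_1) : X^T 0 0 = X 0 0.
Proof. by rewrite mxE. Qed.

Lemma entD (X Y : 'M[R]_1) : (X + Y) 0 0 = X 0 0 + Y 0 0.
Proof. by rewrite mxE. Qed.
Lemma entZ (X : 'M[R]_1) c : (c *: X) 0 0 = c * X 0 0.
Proof. by rewrite mxE. Qed.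
Lemma entN (X : 'M[R]_1) : (- X) 0 0 = - X 0 0.
Proof. by rewrite mxE. Qed.

Definition bil M x y : R := (x^T *m M *m y) 0 0.

Lemma bil_sym M x y : M^T = M -> bil M x y = bil M y x.
Proof.
move=> sM; rewrite /bil -tr11.
by rewrite !trmx_mul trmxK sM mulmxA.
Qed.

Lemma qformDZ M x y t : M^T = M ->
  qform M (x + t *: y) = qform M x + 2 * t * bil M y x + t ^+ 2 * qform M y.
Proof.
move=> sM; rewrite /qform [(_ + _)^T]linearD /= [(_ *: _)^T]linearZ /=.
rewrite !mulmxDl !mulmxDr -!scalemxAl -!scalemxAr !entD !entZ.
rewrite -/(bil M x y) -/(bil M y x) -/(bil M x x) -/(bil M y y).
rewrite (bil_sym x y sM) /bil; ring.
Qed.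

Lemma lformDZ (h x y : 'cV[R]_n) t : lform h (x + t *: y) = lform h x + t * lform h y.
Proof. by rewrite /lform mulmxDr -scalemxAr entD entZ. Qed.

Lemma lform_sym (h x : 'cV[R]_n) : lform h x = lform x h.
Proof. by rewrite /lform -tr11 trmx_mul trmxK. Qed.

Lemma lform_linl (h k x : 'cV[R]_n) s : lform (h + s *: k) x = lform h x + s * lform k x.
Proof. by rewrite lform_sym lformDZ !(lform_sym x). Qed.

Lemma qform_lin M N x s : qform (M + s *: N) x = qform M x + s * qform N x.
Proof. by rewrite /qform mulmxDr mulmxDl -scalemxAr -scalemxAl entD entZ. Qed.

Lemma bil_ker M x z : M^T = M -> M *m z = 0 -> bil M z x = 0.
Proof.
move=> sM Mz; rewrite bil_sym // /bil -mulmxA Mz mulmx0 mxE //.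
Qed.

Lemma qformD_ker M x z : M^T = M -> M *m z = 0 -> qform M (x + z) = qform M x.
Proof.
move=> sM Mz; have := qformDZ x z 1 sM; rewrite scale1r bil_ker // => ->.
have -> : qform M z = 0 by rewrite /qform -mulmxA Mz mulmx0 mxE.
ring.
Qed.

Lemma qformZ M x t : qform M (t *: x) = t ^+ 2 * qform M x.
Proof.
rewrite /qform linearZ /= [(_ *: _)^T]linearZ /= -!scalemxAl !entZ; ring.
Qed.

Lemma qform0 M : qform M (0 : 'cV[R]_n) = 0.
Proof. by rewrite /qform mulmx0 mxE. Qed.

Lemma lform0 (h : 'cV[R]_n) : lform h 0 = 0.
Proof. by rewrite /lform mulmx0 mxE. Qed.

Definition nsq x := lform x x.

Lemma nsqE x : nsq x = \sum_i x i 0 ^+ 2.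
Proof. by rewrite /nsq /lform mxE; apply: eq_bigr => i _; rewrite mxE expr2. Qed.

Lemma nsq_ge0 x : 0 <= nsq x.
Proof. by rewrite nsqE sumr_ge0 // => i _; rewrite sqr_ge0. Qed.

Lemma nsq_eq0 x : nsq x = 0 -> x = 0.
Proof.
rewrite nsqE => /eqP; rewrite psumr_eq0 => [/allP H|i _]; last by rewrite sqr_ge0.
apply/matrixP => i j; rewrite (ord1 j) mxE.
by have := H i (mem_index_enum _); rewrite /= sqrf_eq0 => /eqP.
Qed.

Lemma entry_le_nsq x i : x i 0 ^+ 2 <= nsq x.
Proof.
rewrite nsqE (bigD1 i) //= lerDl sumr_ge0 // => j _; exact: sqr_ge0.
Qed.


Lemma psd_ker M x : M^T = M -> psd M -> qform M x = 0 -> M *m x = 0.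
Proof.
move=> sM pM q0.
have H y : bil M y x = 0.
  have : 2 * bil M y x = 0.
    apply: (@S1 _ (qform M y)) => t.
    by have := pM (x + t *: y); rewrite qformDZ // q0 add0r; congr (_ <= _); ring.
  by move/eqP; rewrite mulf_eq0 pnatr_eq0 /= => /eqP.
apply: nsq_eq0; have := H (M *m x); rewrite /bil -mulmxA.
by rewrite /nsq /lform.
Qed.

Lemma range_lemma M v : M^T = M -> (forall k, M *m k = 0 -> lform v k = 0) ->
  exists w, v = M *m w.
Proof.
move=> sM H.
have hC : v^T *m cokermx M = 0.
  apply/matrixP => i j; rewrite (ord1 i) [RHS]mxE.
  have := H (cokermx M *m delta_mx j 0); rewrite mulmxA mulmx_coker mul0mx.
  move/(_ erefl); rewrite /lform mulmxA -colE mxE => <-.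
  by [].
have : (v^T <= M)%MS by rewrite submxE hC.
case/submxP => D hD; exists D^T.
by rewrite -[v]trmxK hD trmx_mul sM.
Qed.


Lemma lformZ (h x : 'cV[R]_n) t : lform h (t *: x) = t * lform h x.
Proof. by rewrite -[t *: x]add0r lformDZ lform0 add0r. Qed.

Lemma qform_ker M k : M *m k = 0 -> qform M k = 0.
Proof. by move=> Mk; rewrite /qform -mulmxA Mk mulmx0 mxE. Qed.

Lemma uncons M (h : 'cV[R]_n) L : M^T = M ->
  (forall x, L <= qform M x - 2 * lform h x) ->
  exists w, forall x, qform M w - 2 * lform h w <= qform M x - 2 * lform h x.
Proof.
move=> sM H.
have pM : psd M.
  move=> v; apply: (@S2a _ L _ (- 2 * lform h v)) => t.
  by have := H (t *: v); rewrite qformZ lformZ; congr (_ <= _); ring.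
have hk k : M *m k = 0 -> lform h k = 0.
  move=> Mk; have : - 2 * lform h k = 0.
    apply: (@S2b _ L 0) => t.
    by have := H (t *: k); rewrite qformZ lformZ qform_ker //; congr (_ <= _); ring.
  by move/eqP; rewrite mulf_eq0 oppr_eq0 pnatr_eq0 /= => /eqP.
have [w hw] := range_lemma sM hk.
exists w => x.
have key y : qform M (w + y) - 2 * lform h (w + y) = qform M w - 2 * lform h w + qform M y.
  have := qformDZ w y 1 sM; rewrite scale1r => ->.
  have -> : lform h (w + y) = lform h w + lform h y.
    by rewrite -[y in w + y]scale1r lformDZ mul1r.
  have -> : bil M y w = lform h y by rewrite /bil -mulmxA -hw lform_sym.
  ring.
have := key (x - w); rewrite addrCA subrr addr0 => ->.
by rewrite lerDl pM.
Qed.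

End Alg.

Section Top.
Variable R : realType.
Variable n : nat.

Lemma cont_cst (c : R) : continuous (fun _ : 'rV[R]_n => c).
Proof. by move=> x; exact: cst_continuous. Qed.

Lemma cont_mul (F G : 'rV[R]_n -> R) : continuous F -> continuous G ->
  continuous (fun v => F v * G v).
Proof. move=> cF cG x; apply: continuousM; [exact: cF | exact: cG]. Qed.

Lemma cont_add (F G : 'rV[R]_n -> R) : continuous F -> continuous G ->
  continuous (fun v => F v + G v).
Proof. move=> cF cG x; exact: (@continuousD R R^o _ F G x (cF x) (cG x)). Qed.

Lemma cont_sum (I : Type) (r : seq I) (F : I -> 'rV[R]_n -> R) :
  (forall i, continuous (F i)) -> continuous (fun v => \sum_(i <- r) F i v).
Proof.
move=> cF; elim: r => [|i r IH].
  by under eq_fun do rewrite big_nil; exact: cont_cst.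
by under eq_fun do rewrite big_cons; apply: cont_add.
Qed.

Lemma cont_coord i : continuous (fun v : 'rV[R]_n => v 0 i).
Proof. exact: coord_continuous. Qed.

Lemma cont_mulmx m (M : 'M[R]_(n, m)) j : continuous (fun v : 'rV[R]_n => (v *m M) 0 j).
Proof.
under eq_fun do rewrite mxE.
apply: cont_sum => i; apply: cont_mul; [exact: cont_coord | exact: cont_cst].
Qed.

Lemma cont_qform (M : 'M[R]_n) : continuous (fun v : 'rV[R]_n => qform M v^T).
Proof.
under eq_fun do rewrite /qform trmxK mxE.
apply: cont_sum => j; apply: cont_mul; first exact: cont_mulmx.
under eq_fun do rewrite mxE.
exact: cont_coord.
Qed.

Lemma cont_lform (h : 'cV[R]_n) : continuous (fun v : 'rV[R]_n => lform h v^T).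
Proof.
under eq_fun do rewrite /lform mxE.
apply: cont_sum => j; apply: cont_mul; first exact: cont_cst.
under eq_fun do rewrite mxE.
exact: cont_coord.
Qed.


Lemma bounded_entries (A : set 'rV[R]_n) (b : R) :
  (forall v, A v -> forall i, `|v 0 i| <= b) -> bounded_set A.
Proof.
move=> H; rewrite /bounded_set /=; rewrite /bounded_near.
near=> M => v Av /=.
apply: (@le_trans _ _ (Num.max b 0)).
  rewrite /Num.Def.normr /= mx_normrE; apply: bigmax_le => //=; first by rewrite le_max lexx orbT.
  move=> [i j] _ /=; rewrite (ord1 i) le_max; apply/orP; left; exact: H.
near: M; apply: nbhs_pinfty_ge; exact: num_real.
Unshelve. all: by end_near.
Qed.

Lemma evt_min (K : set 'rV[R]_n) (F : 'rV[R]_n -> R) :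
  K !=set0 -> bounded_set K -> closed K -> continuous F ->
  exists2 c, K c & forall v, K v -> F c <= F v.
Proof.
move=> K0 bK cK cF.
have [c cK' Hc] := EVT_min_rV K0 (bounded_closed_compact bK cK) (continuous_subspaceT cF).
exists c; first by rewrite inE in cK'.
by move=> v Kv; apply: Hc; rewrite inE.
Qed.

Lemma closed_pre_le (F : 'rV[R]_n -> R) (b : R) : continuous F -> closed [set v | F v <= b].
Proof.
move=> cF; have -> : [set v | F v <= b] = F @^-1` [set x | x <= b] by [].
by apply: (proj1 (continuous_closedP F) cF); exact: closed_le.
Qed.

Lemma closed_pre_eq (F : 'rV[R]_n -> R) (b : R) : continuous F -> closed [set v | F v = b].
Proof.
move=> cF; have -> : [set v | F v = b] = F @^-1` [set x | x = b] by [].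
by apply: (proj1 (continuous_closedP F) cF); exact: closed_eq.
Qed.


Lemma cont_obj (M : 'M[R]_n) (h : 'cV[R]_n) :
  continuous (fun v : 'rV[R]_n => qform M v^T - 2 * lform h v^T).
Proof.
have -> : (fun v : 'rV[R]_n => qform M v^T - 2 * lform h v^T) =
          (fun v => qform M v^T + (- 2) * lform h v^T).
  by apply: funext => v; rewrite mulNr.
apply: cont_add; first exact: cont_qform.
apply: cont_mul; [exact: cont_cst | exact: cont_lform].
Qed.

End Top.

Definition attained (R : realType) (n : nat) (A B : 'M[R]_n) (f g : 'cV[R]_n) (mu : R) :=
  exists xs : 'cV[R]_n, qp_feas B g mu xs /\
    forall x : 'cV[R]_n, qp_feas B g mu x -> qp_obj A f xs <= qp_obj A f x.

Lemma objDZ (R : realType) (n : nat) (M : 'M[R]_n) (h x d : 'cV[R]_n) t : M^T = M ->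
  qform M (x + t *: d) - 2 * lform h (x + t *: d) =
  (qform M x - 2 * lform h x) + 2 * t * (bil M d x - lform h d) + t ^+ 2 * qform M d.
Proof. by move=> sM; rewrite qformDZ // lformDZ; ring. Qed.

Lemma caseK (R : realType) (n : nat) (A B : 'M[R]_n) (f g : 'cV[R]_n) (mu : R) :
  A^T = A -> B^T = B ->
  (exists L : R, forall x : 'cV[R]_n, qp_feas B g mu x -> L <= qp_obj A f x) ->
  forall d, qform A d <= 0 -> qform B d < 0 -> attained A B f g mu.
Proof.
move=> sA sB [L HL] d Ad Bd.
have key x : qform A d = 0 /\ bil A d x - lform f d = 0.
  apply: (@S3 _ (qform B x - 2 * lform g x - mu) (bil B d x - lform g d) (qform B d)
            L (qform A x - 2 * lform f x) _ _ Bd Ad) => t ht.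
  have := HL (x + t *: d); rewrite /qp_feas /qp_obj !objDZ //.
  apply; lra.
have inv x t : qp_obj A f (x + t *: d) = qp_obj A f x.
  rewrite /qp_obj objDZ //; have [-> ->] := key x; ring.
have feas x : exists t, qp_feas B g mu (x + t *: d).
  have [t ht] := @S4 _ (qform B x - 2 * lform g x - mu) (bil B d x - lform g d) _ Bd.
  by exists t; rewrite /qp_feas objDZ //; lra.
have bound x : L <= qform A x - 2 * lform f x.
  have [t ht] := feas x; have := HL _ ht; rewrite inv.
  by [].
have [w hw] := uncons sA bound.
have [t ht] := feas w.
exists (w + t *: d); split => // x hx.
by rewrite inv; apply: hw.
Qed.

Lemma sym_comb (R : realType) (n : nat) (A B : 'M[R]_n) (s : R) :
  A^T = A -> B^T = B -> (A + s *: B)^T = A + s *: B.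
Proof. by move=> sA sB; rewrite linearD linearZ /= sA sB. Qed.

Lemma caseB (R : realType) (n : nat) (A B : 'M[R]_n) (f g : 'cV[R]_n) (mu : R) :
  A^T = A -> B^T = B ->
  (exists L : R, forall x : 'cV[R]_n, qp_feas B g mu x -> L <= qp_obj A f x) ->
  forall d, A *m d = 0 -> B *m d = 0 -> lform g d != 0 -> attained A B f g mu.
Proof.
move=> sA sB [L HL] d0 Ad0 Bd0 gd0.
set d := (lform g d0)^-1 *: d0.
have Ad : A *m d = 0 by rewrite /d -scalemxAr Ad0 scaler0.
have Bd : B *m d = 0 by rewrite /d -scalemxAr Bd0 scaler0.
have gd : lform g d = 1 by rewrite /d lformZ mulVf.
set phi := lform f d.
have eqA x t : qp_obj A f (x + t *: d) = qp_obj A f x - 2 * t * phi.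
  rewrite /qp_obj objDZ // (bil_ker _ sA Ad) (qform_ker Ad) /phi; ring.
have eqB x t : qform B (x + t *: d) - 2 * lform g (x + t *: d) =
    qform B x - 2 * lform g x - 2 * t.
  rewrite objDZ // (bil_ker _ sB Bd) (qform_ker Bd) gd; ring.
have phi0 : 2 * phi <= 0.
  apply: (@S5 _ ((qform B 0 - 2 * lform g 0 - mu) / 2) L (qp_obj A f 0)) => t ht.
  have := HL (0 + t *: d); rewrite eqA /qp_feas eqB.
  have -> : 2 * t * phi = 2 * phi * t by ring.
  by apply; lra.
set lam := - phi.
have lam0 : 0 <= lam by rewrite /lam; lra.
set A' := A + lam *: B.
set f' := f + lam *: g.
have GE x : qform A' x - 2 * lform f' x =
    qp_obj A f x + lam * (qform B x - 2 * lform g x).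
  by rewrite /A' /f' qform_lin lform_linl /qp_obj; ring.
pose tx x := (qform B x - 2 * lform g x - mu) / 2.
have feas x : qp_feas B g mu (x + tx x *: d) by rewrite /qp_feas eqB /tx; lra.
have valx x : qp_obj A f (x + tx x *: d) =
    qp_obj A f x + lam * (qform B x - 2 * lform g x - mu).
  by rewrite eqA /tx /lam; field.
have bound x : L + lam * mu <= qform A' x - 2 * lform f' x.
  have := HL _ (feas x); rewrite valx GE; lra.
have [w hw] := uncons (sym_comb lam sA sB) bound.
exists (w + tx w *: d); split => // x hx.
rewrite valx.
have := hw x; rewrite !GE.
have : lam * (qform B x - 2 * lform g x - mu) <= 0.
  by rewrite mulr_ge0_le0 //; move: hx; rewrite /qp_feas; lra.
lra.
Qed.

Lemma qformD (R : realType) (n : nat) (M N : 'M[R]_n) x :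
  qform (M + N) x = qform M x + qform N x.
Proof. by rewrite /qform mulmxDr mulmxDl entD. Qed.

Lemma nsq_scale (R : realType) (n : nat) (y : 'cV[R]_n) t : nsq (t *: y) = t ^+ 2 * nsq y.
Proof. by rewrite /nsq lformZ lform_sym lformZ; ring. Qed.

Lemma qform1 (R : realType) (n : nat) (y : 'cV[R]_n) : qform 1%:M y = nsq y.
Proof. by rewrite /qform mulmx1. Qed.

Lemma qformCC (R : realType) (n : nat) (C : 'M[R]_n) (y : 'cV[R]_n) :
  qform (C *m C^T) y = nsq ((y^T *m C)^T).
Proof. by rewrite /qform /nsq /lform trmxK trmx_mul trmxK !mulmxA. Qed.

Lemma cs_ineq (R : realType) (n : nat) (h y : 'cV[R]_n) (e : R) :
  2 * e * lform h y <= nsq h + e ^+ 2 * nsq y.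
Proof.
have := nsq_ge0 (h + (- e) *: y).
rewrite /nsq lformDZ lform_linl lform_linl (lform_sym y h); lra.
Qed.

Lemma caseC (R : realType) (n : nat) (A B : 'M[R]_n) (f g : 'cV[R]_n) (mu : R) :
  A^T = A -> B^T = B ->
  (exists x0, qp_feas B g mu x0) ->
  (exists L : R, forall x : 'cV[R]_n, qp_feas B g mu x -> L <= qp_obj A f x) ->
  forall s1 s2, s1 != s2 -> I_psd A B s1 -> I_psd A B s2 ->
  (forall d, qform A d <= 0 -> qform B d < 0 -> False) ->
  (forall d, A *m d = 0 -> B *m d = 0 -> lform g d = 0) ->
  attained A B f g mu.
Proof.
move=> sA sB [x0 hx0] [L HL] s1 s2 s12 ps1 ps2 hK hg.
pose hh x := qform B x - 2 * lform g x.
have hf d : A *m d = 0 -> B *m d = 0 -> lform f d = 0.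
  move=> Ad Bd; have gd := hg d Ad Bd.
  have : - 2 * lform f d = 0.
    apply: (@S2b _ L (qp_obj A f x0)) => t.
    have := HL (x0 + t *: d).
    rewrite /qp_feas /qp_obj !objDZ // (bil_ker _ sA Ad) (qform_ker Ad).
    rewrite (bil_ker _ sB Bd) (qform_ker Bd) gd.
    move: hx0; rewrite /qp_feas => hx0.
    have -> : qform A x0 - 2 * lform f x0 + 2 * t * (0 - lform f d) + t ^+ 2 * 0 =
              qform A x0 - 2 * lform f x0 + - 2 * lform f d * t by ring.
    by apply; lra.
  by move/eqP; rewrite mulf_eq0 oppr_eq0 pnatr_eq0 /= => /eqP.
set M1 := A + s1 *: B.
set M2 := A + s2 *: B.
set P := M1 + M2.
have sM1 : M1^T = M1 by exact: sym_comb.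
have sM2 : M2^T = M2 by exact: sym_comb.
have sP : P^T = P by rewrite /P linearD /= sM1 sM2.
have M1E (k : 'cV[R]_n) : M1 *m k = A *m k + s1 *: (B *m k) by rewrite /M1 mulmxDl scalemxAl.
have M2E (k : 'cV[R]_n) : M2 *m k = A *m k + s2 *: (B *m k) by rewrite /M2 mulmxDl scalemxAl.
have kerP (k : 'cV[R]_n) : P *m k = 0 -> A *m k = 0 /\ B *m k = 0.
  move=> Pk; have q0 := qform_ker Pk; rewrite /P qformD in q0.
  have h1 := ps1 k; have h2 := ps2 k.
  have e1 : qform M1 k = 0 by rewrite /M1; lra.
  have e2 : qform M2 k = 0 by rewrite /M2; lra.
  have k1 := psd_ker sM1 ps1 e1; have k2 := psd_ker sM2 ps2 e2.
  have Bk : B *m k = 0.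
    have : (s2 - s1) *: (B *m k) = M2 *m k - M1 *m k.
      by rewrite M1E M2E opprD addrACA subrr add0r scalerBl.
    rewrite k1 k2 subrr.
    by move/eqP; rewrite scaler_eq0 subr_eq0 eq_sym (negbTE s12) /= => /eqP.
  split => //; by move: k1; rewrite M1E Bk scaler0 addr0.
set C := cokermx P.
have decomp x : exists y : 'cV[R]_n, [/\ y^T *m C = 0, qp_obj A f y = qp_obj A f x
     & hh y = hh x].
  have sPP : (P *m P)^T = P *m P by rewrite trmx_mul sP.
  have hk (k : 'cV[R]_n) : (P *m P) *m k = 0 -> lform (P *m x) k = 0.
    move=> PPk.
    have Pk : P *m k = 0.
      apply: nsq_eq0; rewrite /nsq /lform trmx_mul sP.
      by rewrite -mulmxA [P *m (P *m k)]mulmxA PPk mulmx0 mxE.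
    rewrite lform_sym /lform mulmxA.
    have -> : k^T *m P = (P *m k)^T by rewrite trmx_mul sP.
    by rewrite Pk trmx0 mul0mx mxE.
  have [u hu] := range_lemma sPP hk.
  exists (P *m u).
  have Pz : P *m (x - P *m u) = 0 by rewrite mulmxBr hu mulmxA subrr.
  have [Az Bz] := kerP _ Pz.
  have fz := hf _ Az Bz; have gz := hg _ Az Bz.
  have xE : x = P *m u + (x - P *m u) by rewrite addrC subrK.
  split.
  - by rewrite trmx_mul sP -mulmxA mulmx_coker mulmx0.
  - rewrite /qp_obj [in RHS]xE (qformD_ker _ sA Az).
    by rewrite -[X in lform f (_ + X)]scale1r lformDZ fz mulr0 addr0.
  - rewrite /hh [in RHS]xE (qformD_ker _ sB Bz).
    by rewrite -[X in lform g (_ + X)]scale1r lformDZ gz mulr0 addr0.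
have Sker (y : 'cV[R]_n) : y^T *m C = 0 -> P *m y = 0 -> y = 0.
  move=> yC Py.
  have : (y^T <= P)%MS by rewrite submxE yC.
  case/submxP => D hD; apply: nsq_eq0.
  by rewrite /nsq /lform hD -mulmxA Py mulmx0 mxE.
have inS (y : 'cV[R]_n) : y^T *m C = 0 <-> qform (C *m C^T) y = 0.
  rewrite qformCC; split => [->|H]; first by rewrite trmx0 /nsq lform0.
  by rewrite -[y^T *m C]trmxK (nsq_eq0 H) trmx0.
have nsq0 : nsq (0 : 'cV[R]_n) = 0 by rewrite /nsq lform0.
pose T := [set v : 'rV[R]_n | qform 1%:M v^T = 1] `&`
          [set v : 'rV[R]_n | qform (C *m C^T) v^T = 0].
have normalize (y : 'cV[R]_n) : y^T *m C = 0 -> y != 0 ->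
    let r := Num.sqrt (nsq y) in 0 < r /\ r ^+ 2 = nsq y /\ T ((r^-1 *: y)^T).
  move=> yC y0 r.
  have ny : 0 < nsq y.
    rewrite lt_neqAle nsq_ge0 andbT; apply/eqP => /esym /nsq_eq0 h.
    by rewrite h eqxx in y0.
  have r0 : 0 < r by rewrite sqrtr_gt0.
  have r2 : r ^+ 2 = nsq y by rewrite sqr_sqrtr // ltW.
  split => //; split => //; split; rewrite /= trmxK.
    by rewrite qform1 nsq_scale exprVn r2 mulVf // gt_eqF.
  by apply/inS; rewrite linearZ /= -scalemxAl yC scaler0.
have coer : exists2 eps : R, 0 < eps & forall y : 'cV[R]_n, y^T *m C = 0 ->
    eps * nsq y <= qform A y \/ eps * nsq y <= qform B y.
  have [[v0 Tv0]|T0] := pselect (exists v, T v); last first.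
    exists 1 => // y yC.
    have [->|y0] := eqVneq y 0; first by left; rewrite nsq0 mulr0 qform0.
    have [_ [_ Tv]] := normalize y yC y0.
    by exfalso; apply: T0; eexists; exact: Tv.
  have cT : closed T by apply: closedI; apply: closed_pre_eq; exact: cont_qform.
  have bT : bounded_set T.
    apply: (@bounded_entries _ _ _ 1) => v [Tv1 _] i.
    have := entry_le_nsq v^T i; rewrite -qform1 Tv1 mxE => hv.
    have := normr_ge0 (v 0 i); have : `|v 0 i| ^+ 2 = v 0 i ^+ 2 by rewrite real_normK ?num_real.
    nra.
  pose F (v : 'rV[R]_n) := Num.max (qform A v^T) (qform B v^T).
  have cF : continuous F.
    move=> v; apply: (@continuous_max R _ (fun v => qform A v^T) (fun v => qform B v^T)).
      exact: cont_qform.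
    exact: cont_qform.
  have [c Tc Hc] := evt_min (ex_intro _ v0 Tv0) bT cT cF.
  exists (F c).
    rewrite ltNge; apply/negP => Fc0.
    move: Fc0; rewrite /F ge_max => /andP [Ac Bc].
    have [Bn|Bz] := ltrP (qform B c^T) 0; first exact: (hK _ Ac Bn).
    have Bc0 : qform B c^T = 0 by apply/eqP; rewrite eq_le Bc Bz.
    have h1 := ps1 c^T; have h2 := ps2 c^T.
    rewrite /I_psd /psd qform_lin Bc0 mulr0 addr0 in h1.
    have Ac0 : qform A c^T = 0 by apply/eqP; rewrite eq_le Ac h1.
    have e1 : qform M1 c^T = 0 by rewrite /M1 qform_lin Ac0 Bc0; ring.
    have e2 : qform M2 c^T = 0 by rewrite /M2 qform_lin Ac0 Bc0; ring.
    have Pc : P *m c^T = 0 by rewrite /P mulmxDl (psd_ker sM1 ps1 e1) (psd_ker sM2 ps2 e2) addr0.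
    case: Tc => [Tc1 Tc2].
    have := Sker _ (proj2 (inS _) Tc2) Pc.
    move=> c0; move: Tc1; rewrite /= c0 qform0 => /eqP; rewrite eq_sym oner_eq0.
    by [].
  move=> y yC.
  have [->|y0] := eqVneq y 0; first by left; rewrite nsq0 mulr0 qform0.
  have [r0 [r2 Tv]] := normalize y yC y0.
  set r := Num.sqrt (nsq y) in r0 r2 Tv.
  have := Hc _ Tv; rewrite /F trmxK !qformZ le_max => /orP [h|h]; [left|right];
    rewrite -r2; have := ler_wpM2l (ltW (exprn_gt0 2 r0)) h;
    by rewrite mulrA -exprMn mulfV ?gt_eqF // expr1n mul1r mulrC.
have [eps eps0 Hco] := coer.
have [y0 [y0C y0o y0h]] := decomp x0.
set c0 := qp_obj A f y0.
set Rb := 2 * `|c0| / eps + 2 * `|mu| / eps + 4 * (nsq f + nsq g) / eps ^+ 2.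
have bnd (y : 'cV[R]_n) : y^T *m C = 0 -> hh y <= mu -> qp_obj A f y <= c0 -> nsq y <= Rb.
  move=> yC hy oy.
  have hN := nsq_ge0 y.
  have e4 : 0 < eps ^+ 2 / 4 by rewrite divr_gt0 // exprn_gt0.
  have key : eps ^+ 2 / 4 * Rb = eps / 2 * `|c0| + eps / 2 * `|mu| + (nsq f + nsq g).
    by rewrite /Rb; field; rewrite gt_eqF.
  rewrite -(ler_pM2l e4) key.
  have nf := nsq_ge0 f; have ng := nsq_ge0 g.
  have e2 : 0 <= eps / 2 by rewrite divr_ge0 // ltW.
  have hc0 := ler_wpM2l e2 (ler_norm c0); have hmu := ler_wpM2l e2 (ler_norm mu).
  have hc0' := ler_wpM2l e2 (normr_ge0 c0); have hmu' := ler_wpM2l e2 (normr_ge0 mu).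
  rewrite mulr0 in hc0' hmu'.
  case: (Hco y yC) => h.
  - have cs := cs_ineq f y (eps / 2).
    have h' : eps * nsq y <= c0 + 2 * lform f y by move: oy; rewrite /qp_obj; lra.
    have := ler_wpM2l e2 h'.
    move=> hh'; lra.
  - have cs := cs_ineq g y (eps / 2).
    have h' : eps * nsq y <= mu + 2 * lform g y by move: hy; rewrite /hh; lra.
    have := ler_wpM2l e2 h'.
    move=> hh'; lra.
pose K := [set v : 'rV[R]_n | qform (C *m C^T) v^T = 0] `&`
          [set v : 'rV[R]_n | qform B v^T - 2 * lform g v^T <= mu] `&`
          [set v : 'rV[R]_n | qform 1%:M v^T <= Rb].
have cK : closed K.
  apply: closedI; first apply: closedI.
  - by apply: closed_pre_eq; exact: cont_qform.
  - by apply: closed_pre_le; exact: cont_obj.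
  - by apply: closed_pre_le; exact: cont_qform.
have bK : bounded_set K.
  apply: (@bounded_entries _ _ _ (1 + Rb)) => v [_ Kv] i.
  have := entry_le_nsq v^T i; rewrite -qform1 mxE => hv.
  have := normr_ge0 (v 0 i); have : `|v 0 i| ^+ 2 = v 0 i ^+ 2 by rewrite real_normK ?num_real.
  move: Kv; rewrite /= => Kv; nra.
have Ky0 : K y0^T.
  split; first split; rewrite /= trmxK.
  - exact/inS.
  - by rewrite -/(hh y0) y0h; exact: hx0.
  - by rewrite qform1; apply: bnd => //; rewrite y0h; exact: hx0.
have [cm Kcm Hcm] := evt_min (ex_intro _ _ Ky0) bK cK (@cont_obj _ _ A f).
exists cm^T; split.
  by case: Kcm => [[_ h] _]; exact: h.
move=> x hx.
have [y [yC yo yh]] := decomp x.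
have Hcm' : forall v, K v -> qp_obj A f cm^T <= qp_obj A f v^T by exact: Hcm.
rewrite -yo.
have [yc|yc] := lerP (qp_obj A f y) c0.
  have := Hcm' y^T; rewrite trmxK; apply => {Hcm'} /=.
  have hy : hh y <= mu by rewrite yh; exact: hx.
  split; first split; rewrite /= trmxK.
  - exact/inS.
  - exact: hy.
  - by rewrite qform1; apply: bnd.
have := Hcm' _ Ky0; rewrite trmxK -/c0.
move=> h; exact: (le_trans h (ltW yc)).
Qed.

Unset Implicit Arguments.

Theorem theorem6 (R : realType) (n : nat) (A B : 'M[R]_n) (f g : 'cV[R]_n) (mu : R) :
  A^T = A -> B^T = B ->
  (* primal Slater condition *)
  (exists x0 : 'cV[R]_n, qform B x0 - 2 * lform g x0 < mu) ->
  (* finite optimal value *)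
  (exists L : R, forall x : 'cV[R]_n, qp_feas B g mu x -> L <= qp_obj A f x) ->
  (* I_psd(A,B) is an interval with more than one point *)
  (exists s1 s2 : R, s1 != s2 /\ I_psd A B s1 /\ I_psd A B s2) ->
  (* the infimum is attained *)
  exists xs : 'cV[R]_n, qp_feas B g mu xs /\
    forall x : 'cV[R]_n, qp_feas B g mu x -> qp_obj A f xs <= qp_obj A f x.
Proof.
move=> sA sB [x0 hx0] HL [s1 [s2 [s12 [p1 p2]]]].
have [[d [Ad Bd]]|nK] := pselect (exists d : 'cV[R]_n, qform A d <= 0 /\ qform B d < 0).
  exact: (caseK sA sB HL Ad Bd).
have [[d [Ad [Bd gd]]]|nB] := pselect (exists d : 'cV[R]_n,
    A *m d = 0 /\ B *m d = 0 /\ lform g d != 0).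
  exact: (caseB sA sB HL Ad Bd gd).
apply: (caseC sA sB _ HL s12 p1 p2).
- by exists x0; rewrite /qp_feas ltW.
- by move=> d Ad Bd; apply: nK; exists d.
- move=> d Ad Bd; apply/eqP/negPn/negP => gd; apply: nB; exists d; split => //.
Qed.
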